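(* For all integers $n\geq 1$, \[p^{ed}_{od}(n)-p^{ed}_{od}(n-1)=2D_e(n-1)-D_o(n-1),\] and consequently \[p^{ed}_{od}(n)-p^{ed}_{od}(n-1)\equiv D_o(n-1)\pmod 2.\]
   Context: $\mathcal{P}^{ed}_{od}$ is the set of integer partitions such that: - all parts are distinct; - every odd part is smaller than every even part; - at least one odd part appears. In particular the empty partition is not in $\mathcal{P}^{ed}_{od}$. For $n\ge 0$: - $p^{ed}_{od}(n)$ is the number of partitions of $n$ in $\mathcal{P}^{ed}_{od}$, so $p^{ed}_{od}(0)=0$. - $D_e(n)$ is the number of partitions of $n$ into distinct even parts, with any number of parts including zero, so $D_e(0)=1$. - $D_o(n)$ is the number of partitions of $n$ into distinct odd parts, with $D_o(0)=1$. *)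

(* Defs.v *)
From mathcomp Require Import all_boot all_order all_algebra.
Set Implicit Arguments. Unset Strict Implicit. Unset Printing Implicit Defensive.

(* A partition of n into distinct parts is identified with its set of parts:
   a set A of positive integers (each <= n, encoded in 'I_n.+1) whose sum is n. *)
Definition distinct_partitions (n : nat) : {set {set 'I_n.+1}} :=
  [set A : {set 'I_n.+1} | (ord0 \notin A) && ((\sum_(i in A) (i : nat)) == n)].

Definition p_ed_od (n : nat) : nat :=
  #|[set A in distinct_partitions n |
      [exists i in A, odd i] &&
      [forall i in A, forall j in A, (odd i && ~~ odd j) ==> (i < j)]]|.

Definition D_e (n : nat) : nat :=
  #|[set A in distinct_partitions n | [forall i in A, ~~ odd i]]|.

Definition D_o (n : nat) : nat :=
  #|[set A in distinct_partitions n | [forall i in A, odd i]]|.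

(* Main.v *)
Require Import Defs.
From mathcomp Require Import all_boot all_order all_algebra zify.
Set Implicit Arguments. Unset Strict Implicit. Unset Printing Implicit Defensive.

Lemma card_split (T : finType) (P q : pred T) :
  #|[set x | P x]| = #|[set x | P x && q x]| + #|[set x | P x && ~~ q x]|.
Proof.
rewrite -(cardID [set x | q x] [set x | P x]); congr (_ + _); apply: eq_card => x;
by rewrite !inE // andbC.
Qed.

Lemma card_bij_in (T U : finType) (f : T -> U) (X : {set T}) (Y : {set U}) :
  {in X &, injective f} -> (forall x, x \in X -> f x \in Y) ->
  (forall y, y \in Y -> exists2 x, x \in X & f x = y) -> #|X| = #|Y|.
Proof.
move=> inj fXY sur; rewrite -(card_in_imset inj); apply: eq_card => y.
apply/imsetP/idP => [[x xX ->]|yY]; first exact: fXY.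
by have [x xX <-] := sur y yY; exists x.
Qed.

Lemma elem_le_sum N (B : {set 'I_N}) (i : 'I_N) : i \in B -> i <= \sum_(j in B) (j : nat).
Proof. by move=> iB; rewrite (bigD1 i) //= leq_addr. Qed.

Definition wid k (A : {set 'I_k.+1}) : {set 'I_k.+2} := [set widen_ord (leqnSn _) i | i in A].

Lemma wid_inj k : injective (widen_ord (leqnSn k.+1)).
Proof. by move=> i j /(congr1 val) /= /val_inj. Qed.

Lemma mem_wid k (A : {set 'I_k.+1}) (x : 'I_k.+2) :
  (x \in wid A) = (x < k.+1) && [exists i : 'I_k.+1 in A, val i == val x].
Proof.
apply/imsetP/andP => [[i iA ->]|[xk /existsP [i /andP [iA /eqP ix]]]].
  by split; [exact: (ltn_ord i) | apply/existsP; exists i; rewrite iA eqxx].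
by exists i => //; apply: val_inj.
Qed.

Lemma wid_ex k (A : {set 'I_k.+1}) (p : nat -> bool) :
  [exists i in wid A, p i] = [exists i in A, p i].
Proof.
apply/existsP/existsP => [[x /andP [/imsetP [i iA ->] px]]|[i /andP [iA pi]]].
  by exists i; rewrite iA.
by exists (widen_ord (leqnSn _) i); rewrite pi andbT; apply: imset_f.
Qed.

Lemma wid_all k (A : {set 'I_k.+1}) (p : nat -> bool) :
  [forall i in wid A, p i] = [forall i in A, p i].
Proof.
apply/forallP/forallP => H x; apply/implyP => xA.
  by have := H (widen_ord (leqnSn _) x); rewrite imset_f.
by move: xA => /imsetP [i iA ->]; have := H i; rewrite iA.
Qed.

Lemma wid_all2 k (A : {set 'I_k.+1}) (r : nat -> nat -> bool) :
  [forall i in wid A, forall j in wid A, r i j] = [forall i in A, forall j in A, r i j].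
Proof.
apply/forallP/forallP => H x; apply/implyP => xA.
  have := H (widen_ord (leqnSn _) x); rewrite imset_f // /=.
  by rewrite (wid_all A (r x)).
move: xA => /imsetP [i iA ->]; have := H i; rewrite iA /=.
by rewrite -(wid_all A (r i)).
Qed.

Lemma wid_sum k (A : {set 'I_k.+1}) : \sum_(i in wid A) (i : nat) = \sum_(i in A) (i : nat).
Proof. by rewrite big_imset //; move=> x y _ _; apply: wid_inj. Qed.

Lemma wid_0 k (A : {set 'I_k.+1}) : (ord0 \in wid A) = (ord0 \in A).
Proof.
rewrite mem_wid /=; apply/existsP/idP => [[i /andP [iA /eqP i0]]|]; last first.
  by move=> A0; exists ord0; rewrite A0.
by have <- : i = ord0 by apply: val_inj.
Qed.

Lemma transfer k (P : {set 'I_k.+1} -> bool) (P' : {set 'I_k.+2} -> bool) :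
  (forall A, P' (wid A) = P A) ->
  #|[set A in distinct_partitions k | P A]| =
  #|[set B : {set 'I_k.+2} | [&& ord0 \notin B, \sum_(i in B) (i : nat) == k & P' B]]|.
Proof.
move=> HP; apply: (@card_bij_in _ _ (@wid k)).
- move=> A1 A2 _ _ E; apply/setP => x.
  have := congr1 (fun S : {set 'I_k.+2} => widen_ord (leqnSn _) x \in S) E => /=.
  by rewrite /wid !(mem_imset _ _ (@wid_inj k)).
- move=> A; rewrite !inE => /andP [/andP [A0 /eqP sA] pA].
  by rewrite wid_0 A0 wid_sum sA eqxx HP.
move=> B; rewrite inE => /and3P [B0 /eqP sB pB].
have Bk : forall x, x \in B -> x < k.+1.
  by move=> x xB; rewrite ltnS; have := elem_le_sum xB; rewrite sB.
have wB : wid [set i : 'I_k.+1 | widen_ord (leqnSn _) i \in B] = B.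
  apply/setP => x; apply/imsetP/idP => [[i]|xB]; first by rewrite inE => ? ->.
  exists (Ordinal (Bk x xB)); last by apply: val_inj.
  by rewrite inE; rewrite (_ : widen_ord _ _ = x) //; apply: val_inj.
set A0 := [set i : 'I_k.+1 | widen_ord (leqnSn _) i \in B] in wB *.
exists A0 => //.
rewrite inE -HP wB pB andbT /distinct_partitions inE -wid_0 -wid_sum wB B0 sB.
by rewrite eqxx.
Qed.

Definition OE N (A : {set 'I_N}) :=
  [forall i in A, forall j in A, (odd i && ~~ odd j) ==> (i < j)].
Definition mo N (A : {set 'I_N}) := \max_(i in A | odd i) (i : nat).

Lemma OEP N (A : {set 'I_N}) i j : OE A -> i \in A -> j \in A -> odd i -> ~~ odd j -> i < j.
Proof.
move=> /forallP /(_ i) H iA jA oi ej.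
by move: H; rewrite iA => /forallP /(_ j); rewrite jA oi ej.
Qed.

Lemma OEI N (A : {set 'I_N}) :
  (forall i j, i \in A -> j \in A -> odd i -> ~~ odd j -> i < j) -> OE A.
Proof.
move=> H; apply/forallP => i; apply/implyP => iA; apply/forallP => j; apply/implyP => jA.
by apply/implyP => /andP [oi ej]; apply: H.
Qed.

Lemma mo_eq N (A : {set 'I_N}) (o : 'I_N) : o \in A -> odd o ->
  (forall i, i \in A -> odd i -> i <= o) -> mo A = o.
Proof.
move=> oA oo H; apply/eqP; rewrite eqn_leq; apply/andP; split.
  by apply/bigmax_leqP => i /andP [iA oi]; apply: H.
by apply: (@leq_bigmax_cond _ (fun i => (i \in A) && odd i) (fun i => (i : nat)) o); rewrite oA.
Qed.

Lemma mo_spec N (A : {set 'I_N}) : [exists i in A, odd i] ->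
  exists o : 'I_N, [/\ o \in A, odd o, mo A = o & forall i, i \in A -> odd i -> i <= o].
Proof.
move=> /existsP [i0 /andP [i0A oi0]].
have : 0 < #|[pred i : 'I_N | (i \in A) && odd i]|.
  by apply/card_gt0P; exists i0; rewrite inE i0A.
move=> /(eq_bigmax_cond (fun i : 'I_N => (i : nat))) [o]; rewrite inE => /andP [oA oo] E.
have H : forall i, i \in A -> odd i -> i <= o.
  move=> i iA oi; rewrite -E.
  by apply: (@leq_bigmax_cond _ [pred i : 'I_N | (i \in A) && odd i] (fun i => (i : nat)) i); rewrite inE iA.
by exists o; split => //; apply: mo_eq.
Qed.

Lemma sum_D1 N (A : {set 'I_N}) a : a \in A ->
  \sum_(i in A) (i : nat) = a + \sum_(i in A :\ a) (i : nat).
Proof. exact: big_setD1. Qed.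

Lemma sum_U1 N (A : {set 'I_N}) a : a \notin A ->
  \sum_(i in a |: A) (i : nat) = a + \sum_(i in A) (i : nat).
Proof. exact: big_setU1. Qed.

Lemma par_lt a b : a < b -> odd a.+1 != odd b -> a.+1 < b.
Proof. by move=> ab pb; rewrite ltn_neqAle ab andbT; apply: contra_neq pb => ->. Qed.

Section Main.
Variable m : nat.
Local Notation T := 'I_m.+2.

Definition psi (A : {set T}) : {set T} :=
  if mo A == 1 then A :\ inord 1 else inord (mo A).-1 |: (A :\ inord (mo A)).

Lemma val_inord1 : nat_of_ord (inord 1 : T) = 1.
Proof. by rewrite inordK. Qed.

Lemma L2 :
  #|[set A : {set T} | [&& ord0 \notin A, \sum_(i in A) (i : nat) == m.+1 &
       [&& [exists i in A, odd i], OE A & mo A == 1]]]| =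
  #|[set B : {set T} | [&& ord0 \notin B, \sum_(i in B) (i : nat) == m &
       [forall i in B, ~~ odd i]]]|.
Proof.
have key : forall A : {set T}, ord0 \notin A -> [exists i in A, odd i] -> mo A == 1 ->
   inord 1 \in A /\ forall i, i \in A -> i != inord 1 -> ~~ odd i.
  move=> A A0 eA /eqP m1; have [o [oA oo mo_o H]] := mo_spec eA.
  have o1 : o = inord 1 by apply: val_inj => /=; rewrite val_inord1 -mo_o.
  split; first by rewrite -o1.
  move=> i iA io; apply/negP => oi; have := H i iA oi; rewrite -mo_o m1.
  have i0 : val i != 0 by apply: contraNneq A0 => i0; rewrite (_ : ord0 = i) //; apply: val_inj.
  have : val i != 1 by move: io; apply: contra => /eqP i1; apply/eqP/val_inj => /=; rewrite val_inord1.
  simpl in *; lia.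
apply: (@card_bij_in _ _ psi).
- move=> A1 A2; rewrite !inE => /and3P [A10 _ /and3P [e1 _ m1]] /and3P [A20 _ /and3P [e2 _ m2]].
  rewrite /psi m1 m2 => E.
  have [k1 _] := key _ A10 e1 m1; have [k2 _] := key _ A20 e2 m2.
  by rewrite -(setD1K k1) E setD1K.
- move=> A; rewrite !inE => /and3P [A0 /eqP sA /and3P [eA _ m1]].
  have [k1 k2] := key _ A0 eA m1.
  rewrite /psi m1 in_setD1 negb_and A0 orbT /=.
  apply/andP; split.
    by apply/eqP; move: sA; rewrite (sum_D1 k1) val_inord1 => /eqP; rewrite eqSS => /eqP.
  apply/forallP => i; apply/implyP; rewrite in_setD1 => /andP [io iA]; exact: k2.
move=> B; rewrite inE => /and3P [B0 /eqP sB eB].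
have ev : forall i, i \in B -> ~~ odd i by move=> i iB; move/forallP: eB => /(_ i); rewrite iB.
have n1 : (inord 1 : T) \notin B by apply/negP => /ev; rewrite val_inord1.
have mo1 : mo (inord 1 |: B) = 1.
  rewrite (@mo_eq _ _ (inord 1)) ?val_inord1 ?setU11 //.
  by move=> i; rewrite in_setU1 => /orP [/eqP ->|/ev /negPf ->]; rewrite ?val_inord1.
exists (inord 1 |: B); last first.
  by rewrite /psi mo1 eqxx setU1K.
rewrite inE in_setU1 negb_or B0 andbT sum_U1 // sB val_inord1 eqxx /=.
have o1 : (ord0 : T) != inord 1 by rewrite -val_eqE /= val_inord1.
rewrite o1 mo1 eqxx andbT /=.
apply/andP; split; first by apply/existsP; exists (inord 1); rewrite setU11 val_inord1.
  apply: OEI => i j; rewrite !in_setU1 => /orP [/eqP ->|/ev /negPf -> //] /orP [/eqP ->|jB].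
    by rewrite val_inord1.
  move=> _ ej; rewrite val_inord1.
  have : (j : nat) != 0 by apply: contraNneq B0 => j0; rewrite (_ : ord0 = j) //; apply: val_inj.
  by move: ej; case: (nat_of_ord j) => [|[|k]].
Qed.


Lemma val_inordT k : k < m.+2 -> nat_of_ord (inord k : T) = k.
Proof. by move=> h; rewrite inordK. Qed.

Definition inX1 (A : {set T}) := [&& ord0 \notin A, \sum_(i in A) (i : nat) == m.+1 &
       [&& [exists i in A, odd i], OE A & mo A != 1]].

Lemma X1P A : inX1 A -> exists o : T, [/\ o \in A, odd o, 2 < o,
   (forall i, i \in A -> odd i -> i <= o) & psi A = inord o.-1 |: (A :\ o)].
Proof.
move=> /and3P [A0 _ /and3P [eA _ m1]].
have [o [oA oo mo_o H]] := mo_spec eA.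
exists o; split => //.
  have o0 : (o : nat) != 0 by apply: contraNneq A0 => o0; rewrite (_ : ord0 = o) //; apply: val_inj.
  move: m1 o0 oo; rewrite mo_o; case: (nat_of_ord o) => [|[|[|k]]] //.
rewrite /psi (negPf m1) mo_o; congr (_ |: (A :\ _)); apply: val_inj => /=.
by rewrite inordK.
Qed.

Lemma predo_notin (A : {set T}) (o : T) : OE A -> o \in A -> odd o -> 0 < o ->
  (inord o.-1 : T) \notin A.
Proof.
move=> oe oA oo o0; apply/negP => eA.
have vo : nat_of_ord (inord o.-1 : T) = o.-1 by apply: val_inordT; have := ltn_ord o; lia.
have := OEP oe oA eA oo; rewrite vo.
have : ~~ odd o.-1 by move: oo o0; case: (nat_of_ord o).
by move=> -> /(_ isT); lia.
Qed.

Lemma o_le (A1 A2 : {set T}) (o1 o2 : T) : OE A1 ->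
  o1 \in A1 -> odd o1 -> 2 < o1 -> odd o2 -> 2 < o2 ->
  inord o1.-1 |: (A1 :\ o1) = inord o2.-1 |: (A2 :\ o2) -> o1 <= o2.
Proof.
move=> oe1 o1A oo1 o12 oo2 o22 E; rewrite leqNgt; apply/negP => lt21.
have v2 : nat_of_ord (inord o2.-1 : T) = o2.-1 by apply: val_inordT; have := ltn_ord o2; lia.
have v1 : nat_of_ord (inord o1.-1 : T) = o1.-1 by apply: val_inordT; have := ltn_ord o1; lia.
have : (inord o2.-1 : T) \in inord o1.-1 |: (A1 :\ o1) by rewrite E setU11.
rewrite in_setU1 => /orP [/eqP/(congr1 val) /=|]; first by rewrite v1 v2; lia.
rewrite in_setD1 => /andP [_ eA].
have ev : ~~ odd o2.-1 by move: oo2 o22; case: (nat_of_ord o2).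
have := OEP oe1 o1A eA oo1; rewrite v2 ev => /(_ isT); lia.
Qed.

Lemma L1 :
  #|[set A : {set T} | inX1 A]| =
  #|[set B : {set T} | [&& ord0 \notin B, \sum_(i in B) (i : nat) == m &
       OE B && ~~ [forall i in B, odd i]]]|.
Proof.
apply: (@card_bij_in _ _ psi).
- move=> A1 A2; rewrite !inE => X1 X2.
  have [o1 [o1A oo1 o12 H1 ->]] := X1P X1.
  have [o2 [o2A oo2 o22 H2 ->]] := X1P X2.
  have oe1 : OE A1 by case/and3P: X1 => _ _ /and3P [].
  have oe2 : OE A2 by case/and3P: X2 => _ _ /and3P [].
  move=> E.
  have oo : o1 = o2.
    apply: val_inj; apply/eqP; rewrite eqn_leq (o_le oe1 o1A oo1 o12 oo2 o22 E).
    by rewrite (o_le oe2 o2A oo2 o22 oo1 o12 (esym E)).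
  subst o2.
  have n1 : (inord o1.-1 : T) \notin A1 :\ o1.
    by rewrite in_setD1 negb_and (predo_notin oe1 o1A oo1) ?orbT //; lia.
  have n2 : (inord o1.-1 : T) \notin A2 :\ o1.
    by rewrite in_setD1 negb_and (predo_notin oe2 o2A oo1) ?orbT //; lia.
  by rewrite -(setD1K o1A) -(setU1K n1) E setU1K // setD1K.
- move=> A; rewrite !inE => X1.
  have [o [oA oo o2 H ->]] := X1P X1.
  have /and3P [A0 /eqP sA /and3P [_ oe _]] := X1.
  have vo : nat_of_ord (inord o.-1 : T) = o.-1 by apply: val_inordT; have := ltn_ord o; lia.
  have ev : ~~ odd o.-1 by move: oo o2; case: (nat_of_ord o).
  have n1 : (inord o.-1 : T) \notin A :\ o.
    by rewrite in_setD1 negb_and (predo_notin oe oA oo) ?orbT //; lia.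
  apply/and3P; split.
  + rewrite in_setU1 in_setD1 negb_or negb_and A0 orbT andbT -val_eqE /= vo; lia.
  + rewrite sum_U1 // vo; move: sA; rewrite (sum_D1 oA). move=> h; rewrite -(eqn_add2l 1) addnA add1n prednK; [by rewrite h | lia].
  apply/andP; split.
    apply: OEI => i j; rewrite !in_setU1 !in_setD1.
    move=> /orP [/eqP -> |/andP [io iA]]; first by rewrite vo (negPf ev).
    move=> /orP [/eqP -> |/andP [jo jA]] oi; last by move=> ej; apply: (OEP oe iA jA oi ej).
    move=> _; rewrite vo.
    have : i < o by rewrite ltn_neqAle io H.
    move=> /par_lt; rewrite /= oi oo => /(_ isT); lia.
  apply/negP => /forallP /(_ (inord o.-1)); rewrite setU11 /= vo; exact/negP.
move=> B; rewrite inE => /and3P [B0 /eqP sB /andP [oe ne]].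
have exP : exists k, [exists i in B, (nat_of_ord i == k) && ~~ odd i].
  move: ne; rewrite negb_forall => /existsP [i]; rewrite negb_imply => /andP [iB oi].
  by exists (nat_of_ord i); apply/existsP; exists i; rewrite iB eqxx.
case: (ex_minnP exP) => k /existsP [j /and3P [jB /eqP jk ej]] kmin.
have k0 : 0 < k by rewrite -jk lt0n; apply: contraNneq B0 => j0; rewrite (_ : ord0 = j) //; apply: val_inj.
have km : k <= m by rewrite -sB -jk elem_le_sum.
set a : T := inord k.+1.
have va : nat_of_ord a = k.+1 by apply: val_inordT; lia.
have oa : odd a by rewrite va /= -jk ej.
have aB : a \notin B.
  by apply/negP => aB; have := OEP oe aB jB oa ej; rewrite va jk; lia.
have aBj : a \notin B :\ j by rewrite in_setD1 (negPf aB) andbF.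
have moA : mo (a |: (B :\ j)) = k.+1.
  rewrite -va; apply: mo_eq => //; first by rewrite setU11.
  move=> i; rewrite in_setU1 in_setD1 => /orP [/eqP -> //|/andP [_ iB] oi].
  by have := OEP oe iB jB oi ej; rewrite va jk; lia.
exists (a |: (B :\ j)).
  rewrite inE; apply/and3P; split.
  + rewrite in_setU1 in_setD1 negb_or negb_and (negPf B0) orbT andbT -val_eqE /= va //.
  + rewrite sum_U1 // va addSn eqSS; move: sB; rewrite (sum_D1 jB) jk => ->//.
  apply/and3P; split.
  + by apply/existsP; exists a; rewrite setU11.
  + apply: OEI => i l; rewrite !in_setU1 !in_setD1.
    move=> Hi /orP [/eqP -> |/andP [lj lB]]; first by move=> _; rewrite oa.
    move: Hi => /orP [/eqP -> |/andP [_ iB]] oi el; last exact: (OEP oe iB lB oi el).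
    rewrite va; apply: par_lt; last by rewrite /= -jk ej (negPf el).
    rewrite ltn_neqAle kmin ?andbT; last by apply/existsP; exists l; rewrite lB eqxx.
    by rewrite -jk val_eqE eq_sym.
  + rewrite moA; have : ~~ odd k by rewrite -jk.
    by move: k0; case: (k) => [|[|k2]].
rewrite /psi moA /=.
have -> : (k.+1 == 1) = false by move: k0; case: (k).
have -> : (inord k.+1 : T) = a by [].
have -> : (inord k.+1.-1 : T) = j by apply: val_inj => /=; rewrite inordK -?jk //; lia.
by rewrite setU1K // setD1K.
Qed.

Lemma card_eqP (U : finType) (P Q : pred U) : (forall x, P x = Q x) ->
  #|[set x | P x]| = #|[set x | Q x]|.
Proof. by move=> H; apply: eq_card => x; rewrite !inE H. Qed.

Lemma ev_OE N (B : {set 'I_N}) : [forall i in B, ~~ odd i] -> OE B.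
Proof.
move=> /forallP H; apply: OEI => i j iB _ oi _.
by have := H i; rewrite iB oi.
Qed.

Lemma od_OE N (B : {set 'I_N}) : [forall i in B, odd i] -> OE B.
Proof.
move=> /forallP H; apply: OEI => i j _ jB _ ej.
by have := H j; rewrite jB (negPf ej).
Qed.

Lemma nat_id : p_ed_od m.+1 + D_o m = p_ed_od m + 2 * D_e m.
Proof.
have Hp1 : p_ed_od m.+1 = #|[set A : {set T} | [&& ord0 \notin A,
     \sum_(i in A) (i : nat) == m.+1 & [exists i in A, odd i] && OE A]]|.
  by apply: eq_card => A; rewrite !inE /OE -!andbA.
have Hp0 : p_ed_od m = #|[set A : {set T} | [&& ord0 \notin A,
     \sum_(i in A) (i : nat) == m & [exists i in A, odd i] && OE A]]|.
  rewrite /p_ed_od (@transfer m _ (fun A : {set T} => [exists i in A, odd i] && OE A)) //.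
  by move=> A; rewrite wid_ex /OE (wid_all2 A (fun i j => (odd i && ~~ odd j) ==> (i < j))).
have He : D_e m = #|[set A : {set T} | [&& ord0 \notin A,
     \sum_(i in A) (i : nat) == m & [forall i in A, ~~ odd i]]]|.
  by rewrite /D_e (@transfer m _ (fun A : {set T} => [forall i in A, ~~ odd i])) // => A; rewrite (wid_all A (fun i => ~~ odd i)).
have Ho : D_o m = #|[set A : {set T} | [&& ord0 \notin A,
     \sum_(i in A) (i : nat) == m & [forall i in A, odd i]]]|.
  by rewrite /D_o (@transfer m _ (fun A : {set T} => [forall i in A, odd i])) // => A; rewrite (wid_all A odd).
have S1 := card_split (fun A : {set T} => [&& ord0 \notin A,
     \sum_(i in A) (i : nat) == m.+1 & [exists i in A, odd i] && OE A]) (fun A => mo A != 1).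
have S2 := card_split (fun A : {set T} => [&& ord0 \notin A,
     \sum_(i in A) (i : nat) == m & OE A]) (fun A => [exists i in A, odd i]).
have S3 := card_split (fun A : {set T} => [&& ord0 \notin A,
     \sum_(i in A) (i : nat) == m & OE A]) (fun A => ~~ [forall i in A, odd i]).
have E1 : #|[set A : {set T} | inX1 A]| = #|[set A : {set T} | [&& ord0 \notin A,
     \sum_(i in A) (i : nat) == m.+1 & [exists i in A, odd i] && OE A] && (mo A != 1)]|.
  by apply: card_eqP => A; rewrite /inX1 -!andbA.
have E2 : #|[set A : {set T} | [&& ord0 \notin A, \sum_(i in A) (i : nat) == m.+1 &
       [exists i in A, odd i] && OE A] && ~~ (mo A != 1)]| =
  #|[set B : {set T} | [&& ord0 \notin B, \sum_(i in B) (i : nat) == m &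
       [forall i in B, ~~ odd i]]]|.
  by rewrite -L2; apply: card_eqP => A; rewrite negbK -!andbA.
have E3 : #|[set A : {set T} | [&& ord0 \notin A, \sum_(i in A) (i : nat) == m &
       [exists i in A, odd i] && OE A]]| = #|[set A : {set T} | [&& ord0 \notin A,
     \sum_(i in A) (i : nat) == m & OE A] && [exists i in A, odd i]]|.
  by apply: card_eqP => A; rewrite -!andbA (andbC (OE A)).
have E4 : #|[set A : {set T} | [&& ord0 \notin A, \sum_(i in A) (i : nat) == m &
       [forall i in A, ~~ odd i]]]| = #|[set A : {set T} | [&& ord0 \notin A,
     \sum_(i in A) (i : nat) == m & OE A] && ~~ [exists i in A, odd i]]|.
  apply: card_eqP => A; rewrite negb_exists_in -!andbA.
  by case: (boolP [forall i in A, ~~ odd i]) => h; rewrite ?andbF // (ev_OE h).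
have E5 : #|[set A : {set T} | [&& ord0 \notin A, \sum_(i in A) (i : nat) == m &
       [forall i in A, odd i]]]| = #|[set A : {set T} | [&& ord0 \notin A,
     \sum_(i in A) (i : nat) == m & OE A] && ~~ ~~ [forall i in A, odd i]]|.
  apply: card_eqP => A; rewrite negbK -!andbA.
  by case: (boolP [forall i in A, odd i]) => h; rewrite ?andbF // (od_OE h).
have E6 : #|[set A : {set T} | inX1 A]| = #|[set B : {set T} | [&& ord0 \notin B, \sum_(i in B) (i : nat) == m &
       OE B] && ~~ [forall i in B, odd i]]|.
  by rewrite L1; apply: card_eqP => B; rewrite -!andbA.
rewrite Hp1 Hp0 He Ho S1 -E1 E6 E2 E3 E4 E5.
pose QQ := #|[set A : {set T} | [&& ord0 \notin A, \sum_(i in A) (i : nat) == m & OE A]]|.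
have S2' : QQ = #|[set A : {set T} | [&& ord0 \notin A, \sum_(i in A) (i : nat) == m & OE A] && [exists i in A, odd i]]| +
  #|[set A : {set T} | [&& ord0 \notin A, \sum_(i in A) (i : nat) == m & OE A] && ~~ [exists i in A, odd i]]|.
  exact: card_split.
have S3' : QQ = #|[set A : {set T} | [&& ord0 \notin A, \sum_(i in A) (i : nat) == m & OE A] && ~~ [forall i in A, odd i]]| +
  #|[set A : {set T} | [&& ord0 \notin A, \sum_(i in A) (i : nat) == m & OE A] && ~~ ~~ [forall i in A, odd i]]|.
  exact: card_split.
lia.
Qed.

End Main.

Unset Implicit Arguments.
Import GRing.Theory Num.Theory.
Local Open Scope ring_scope.

Theorem mainTheorem5 (n : nat) (hn : (1 <= n)%N) :
  ((p_ed_od n)%:Z - (p_ed_od n.-1)%:Z = 2 * (D_e n.-1)%:Z - (D_o n.-1)%:Z) /\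
  (p_ed_od n)%:Z - (p_ed_od n.-1)%:Z = (D_o n.-1)%:Z %[mod 2]%Z.
Proof.
case: n hn => // m _ /=.
have H := nat_id m.
have e : (p_ed_od m.+1)%:Z - (p_ed_od m)%:Z = 2 * (D_e m)%:Z - (D_o m)%:Z by lia.
split => //; rewrite e.
rewrite (_ : 2 * (D_e m)%:Z - (D_o m)%:Z = ((D_e m)%:Z - (D_o m)%:Z) * 2 + (D_o m)%:Z); last by lia.
exact: modzMDl.
Qed.
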